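(* A ring $R$ is strongly nil-clean if and only if $R$ is a GSWNC ring and $R$ is a UU ring.
   Context: All rings are associative with identity. An element $a$ of a ring is strongly nil-clean if $a = e + q$ with $e$ idempotent, $q$ nilpotent and $eq = qe$; it is strongly weakly nil-clean if there exist an idempotent $e$ and a nilpotent $q$ with $eq = qe$ such that $a = q + e$ or $a = q - e$. A ring is strongly nil-clean if all its elements are strongly nil-clean; it is GSWNC if every non-invertible element is strongly weakly nil-clean. A ring $R$ is UU if every unit is unipotent, i.e., $U(R) \subseteq 1 + {\rm Nil}(R)$. *)

(* Defs.v *)
From mathcomp Require Import all_boot all_order all_algebra.
Set Implicit Arguments. Unset Strict Implicit. Unset Printing Implicit Defensive.
Import GRing.Theory.
Local Open Scope ring_scope.

Definition idempotent {R : unitRingType} (e : R) : Prop := e * e = e.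
Definition nilpotent {R : unitRingType} (q : R) : Prop := exists n : nat, q ^+ n = 0.

Definition strongly_nil_clean_elt {R : unitRingType} (a : R) : Prop :=
  exists e q : R, idempotent e /\ nilpotent q /\ e * q = q * e /\ a = e + q.

Definition strongly_weakly_nil_clean_elt {R : unitRingType} (a : R) : Prop :=
  exists e q : R, idempotent e /\ nilpotent q /\ e * q = q * e /\
    (a = q + e \/ a = q - e).

Definition strongly_nil_clean_ring (R : unitRingType) : Prop :=
  forall a : R, strongly_nil_clean_elt a.

Definition GSWNC_ring (R : unitRingType) : Prop :=
  forall a : R, a \isn't a GRing.unit -> strongly_weakly_nil_clean_elt a.

Definition UU_ring (R : unitRingType) : Prop :=
  forall u : R, u \is a GRing.unit -> nilpotent (u - 1).

(* Main.v *)
Require Import Defs.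
From mathcomp Require Import all_boot all_order all_algebra.
From mathcomp Require Import zify.
Import GRing.Theory.
Local Open Scope ring_scope.

Lemma nilD (R : unitRingType) (x y : R) :
  GRing.comm x y -> nilpotent x -> nilpotent y -> nilpotent (x + y).
Proof.
move=> cxy [n hx] [m hy]; exists (n + m)%N.
rewrite exprDn_comm //; apply: big1 => i _.
case: (leqP n (n + m - i)) => h.
  by rewrite -(subnKC h) exprD hx !mul0r mul0rn.
have hi : (m <= i)%N by have := ltn_ord i; lia.
by rewrite -(subnKC hi) exprD hy mul0r mulr0 mul0rn.
Qed.

Theorem lemma2p31 (R : unitRingType) :
  strongly_nil_clean_ring R <-> GSWNC_ring R /\ UU_ring R.
Proof.
split.
  move=> H; split.
    move=> a _; have [e [q [he [hq [hc ha]]]]] := H a.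
    by exists e, q; do 3 split => //; left; rewrite ha addrC.
  move=> u hu; have [e [q [he [hq [hc ha]]]]] := H u.
  set f := 1 - e.
  have ef : e * f = 0 by rewrite /f mulrBr mulr1 he subrr.
  have uf : u * f = q * f by rewrite ha mulrDl ef add0r.
  have cqu : GRing.comm q u by rewrite /GRing.comm ha mulrDr mulrDl hc.
  have cvq : GRing.comm (u^-1) q by apply/commr_sym/commrV.
  have vqf : u^-1 * q * f = f by rewrite -mulrA -uf mulrA mulVr ?mul1r.
  have fn : forall n, (u^-1 * q) ^+ n * f = f.
    elim=> [|n IH]; first by rewrite expr0 mul1r.
    by rewrite exprSr -mulrA vqf IH.
  have [n hqn] := hq.
  have f0 : f = 0 by rewrite -(fn n) exprMn_comm // hqn mulr0 mul0r.
  have e1 : e = 1 by move: f0; rewrite /f => /eqP; rewrite subr_eq0 => /eqP ->.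
  by rewrite ha e1 (addrC 1) addrK.
move=> [HG HU] a.
case: (boolP (a \is a GRing.unit)) => ua.
  exists 1, (a - 1); split; first by rewrite /Defs.idempotent mulr1.
  split; first exact: HU.
  by split; [rewrite mul1r mulr1 | rewrite addrC subrK].
have [e [q [he [hq [hc ha]]]]] := HG a ua.
case: ha => ha.
  by exists e, q; do 3 split => //; rewrite ha addrC.
set t : R := -1 - 1.
have ht : nilpotent t by apply: HU; rewrite unitrN unitr1.
have cte : GRing.comm t e by rewrite /GRing.comm /t mulrBl mulrBr mulN1r mulrN1 mul1r mulr1.
have cqt : GRing.comm q t by rewrite /GRing.comm /t mulrBl mulrBr mulN1r mulrN1 mul1r mulr1.
have nte : nilpotent (t * e).
  by case: ht => k hk; exists k; rewrite exprMn_comm // hk mul0r.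
have cq : GRing.comm q (t * e) by rewrite /GRing.comm mulrA cqt -!mulrA hc.
exists e, (q + t * e); split => //; split; first exact: nilD.
split.
  have h1 : e * (t * e) = t * e * e by rewrite mulrA -cte -mulrA he.
  by rewrite [e * _]mulrDr [(q + _) * e]mulrDl hc h1.
rewrite ha /t mulrBl mulN1r mul1r addrA (addrC e) -addrA; congr (_ + _).
by rewrite addrA subrr add0r.
Qed.
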